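(* With $T$ and $\tilde S$ as in the context, $p_T/2\le p_{\tilde S}\le p_T$.
   Context: Barycentric subdivisions: $T_0$ is an equilateral triangle with vertices $v_0,v_1,v_2$. $T_n$ is obtained by subdividing every triangular face $\{x,y,z\}$ of $T_{n-1}$ into the six triangles $\{x,m_{xy},c\},\{m_{xy},y,c\},\{y,m_{yz},c\},\{m_{yz},z,c\},\{z,m_{zx},c\},\{m_{zx},x,c\}$, where $m_{uv}$ are side midpoints and $c$ is the barycenter. As a simple graph, $T_n$ has the vertices of this triangulation and the sides of its $6^n$ faces as edges. $\tilde S_n$ is the multigraph on the vertex set of $T_n$ containing, for each face of $T_n$, its own copy of each of the face's three sides. Sides shared by two faces, i.e. edges not on the boundary of $T_0$, are therefore doubled, and boundary edges are single. This is the graph obtained from the $n$-th approximation of the non-p.c.f. Sierpinski gasket by identifying midpoints of parallel edges. $T$ and $\tilde S$ denote the limits. Bond percolation with parameter $p$: each edge receives an i.i.d. uniform $[0,1]$ label $\omega(e)$ and is open if $\omega(e)<p$. For $G\in\{T,\tilde S\}$ with approximations $G_n$, $p_G=\sup\{p\in[0,1]:\mathbb{P}_p(\text{there is an open path from } v_0 \text{ to } v_1 \text{ in } G_n)\to0 \text{ as } n\to\infty\}$. *)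

(* Defs.v *)
From HB Require Import structures.
From mathcomp Require Import all_boot all_order all_algebra.
From mathcomp Require Import all_classical all_reals all_analysis.
Set Implicit Arguments. Unset Strict Implicit. Unset Printing Implicit Defensive.
Import Order.TTheory GRing.Theory Num.Theory numFieldNormedType.Exports.
Local Open Scope ring_scope.
Local Open Scope classical_set_scope.

(** Points of the plane, in barycentric coordinates w.r.t. the triangle
    T_0 = (v0, v1, v2).  Midpoints and barycenters are affine notions, so
    barycentric coordinates describe the construction exactly. *)
Definition point := (rat * rat * rat)%type.

Definition v0 : point := (1, 0, 0).
Definition v1 : point := (0, 1, 0).
Definition v2 : point := (0, 0, 1).

Definition padd (x y : point) : point := (x.1.1 + y.1.1, x.1.2 + y.1.2, x.2 + y.2).
Definition pscale (c : rat) (x : point) : point := (c * x.1.1, c * x.1.2, c * x.2).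

Definition midpt (x y : point) : point := pscale (1 / 2) (padd x y).
Definition bary (x y z : point) : point := pscale (1 / 3) (padd (padd x y) z).

Definition face := (point * point * point)%type.

Definition subdivide (f : face) : seq face :=
  let: (x, y, z) := f in
  let c := bary x y z in
  let mxy := midpt x y in let myz := midpt y z in let mzx := midpt z x in
  [:: (x, mxy, c); (mxy, y, c); (y, myz, c); (myz, z, c); (z, mzx, c); (mzx, x, c)].

Fixpoint faces (n : nat) : seq face :=
  match n with
  | 0 => [:: (v0, v1, v2)]
  | n'.+1 => flatten (map subdivide (faces n'))
  end.

Definition sides (f : face) : seq (point * point) :=
  let: (x, y, z) := f in [:: (x, y); (y, z); (z, x)].

Fixpoint undup_unordered (s : seq (point * point)) : seq (point * point) :=
  match s with
  | [::] => [::]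
  | e :: s' => if (e \in s') || ((e.2, e.1) \in s') then undup_unordered s'
               else e :: undup_unordered s'
  end.

(** Edge list of the multigraph S~_n: each face contributes its own copy of
    each of its three sides (interior sides are thus doubled). *)
Definition edges_S (n : nat) : seq (point * point) := flatten (map sides (faces n)).

(** Edge list of the simple graph T_n: the sides of the faces, each
    (unordered) side listed once. *)
Definition edges_T (n : nat) : seq (point * point) := undup_unordered (edges_S n).

(** For an edge list [es] (a multigraph; edges are indexed by positions in
    [es]) and a set [O] of open edges, [a] and [b] are joined by an open path. *)
Definition open_adj (es : seq (point * point)) (O : {set 'I_(size es)})
  (x y : point) : bool :=
  [exists i in O, (nth (v0, v0) es i == (x, y)) || (nth (v0, v0) es i == (y, x))].

Definition open_connected (es : seq (point * point)) (O : {set 'I_(size es)})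
  (a b : point) : Prop :=
  exists s : seq point, path (open_adj O) a s /\ last a s = b.

(** Bond percolation with parameter p: edges are independently open with
    probability p (i.e. P(omega(e) < p) = p for a uniform label omega(e)).
    [perc_prob es p a b] = P_p(there is an open path from a to b). *)
Definition perc_prob {R : realType} (es : seq (point * point)) (p : R)
  (a b : point) : R :=
  \sum_(O : {set 'I_(size es)})
     p ^+ #|O| * (1 - p) ^+ (size es - #|O|)
     * (if `[< open_connected O a b >] then 1 else 0).

Definition crit_value {R : realType} (G : nat -> seq (point * point)) : R :=
  sup [set p : R | 0 <= p <= 1 /\
                   (fun n : nat => perc_prob (G n) p v0 v1) @ \oo --> (0 : R)].

Definition p_T {R : realType} : R := crit_value edges_T.
Definition p_S {R : realType} : R := crit_value edges_S.

(* Main.v *)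
Require Import Defs.
From HB Require Import structures.
From mathcomp Require Import all_boot all_order all_algebra.
From mathcomp Require Import all_classical all_reals all_analysis.
From mathcomp Require Import ring lra.
Import Order.TTheory GRing.Theory Num.Theory numFieldNormedType.Exports.
Local Open Scope ring_scope.

Definition D (x y z : Defs.point) : rat :=
  x.1.1 * (y.1.2 * z.2 - y.2 * z.1.2) - x.1.2 * (y.1.1 * z.2 - y.2 * z.1.1)
  + x.2 * (y.1.1 * z.1.2 - y.1.2 * z.1.1).

Definition inside (F : face) (p : Defs.point) : Prop :=
  let: (x, y, z) := F in [/\ 0 < D x y p, 0 < D y z p & 0 < D z x p].
Definition pos (F : face) : Prop := let: (x, y, z) := F in 0 < D x y z.
Definition disj (F G : face) : Prop := forall p, ~ (inside F p /\ inside G p).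

Ltac geo := repeat match goal with a : Defs.point |- _ => move: a => [[? ?] ?] end;
  rewrite /D /midpt /bary /pscale /padd /=; by field.

Lemma children_inside (x y z p : Defs.point) :
 let A := D x y p in let B := D y z p in let C := D z x p in
 [/\ inside (x, midpt x y, bary x y z) p -> [/\ 0 < A, C < B & A < C],
     inside (midpt x y, y, bary x y z) p -> [/\ 0 < A, A < B & B < C]
   & inside (y, midpt y z, bary x y z) p -> [/\ 0 < B, A < C & B < A]] /\
 [/\ inside (midpt y z, z, bary x y z) p -> [/\ 0 < B, B < C & C < A],
     inside (z, midpt z x, bary x y z) p -> [/\ 0 < C, B < A & C < B]
   & inside (midpt z x, x, bary x y z) p -> [/\ 0 < C, C < A & A < B]].
Proof.
move=> A B C /=.
have e1 : D x (midpt x y) p = A/2 by rewrite /A /B /C; geo.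
have e2 : D (midpt x y) (bary x y z) p = (B - C)/6 by rewrite /A /B /C; geo.
have e3 : D (bary x y z) x p = (C - A)/3 by rewrite /A /B /C; geo.
have e4 : D (midpt x y) y p = A/2 by rewrite /A /B /C; geo.
have e5 : D y (bary x y z) p = (B - A)/3 by rewrite /A /B /C; geo.
have e6 : D (bary x y z) (midpt x y) p = (C - B)/6 by rewrite /A /B /C; geo.
have e7 : D y (midpt y z) p = B/2 by rewrite /A /B /C; geo.
have e8 : D (midpt y z) (bary x y z) p = (C - A)/6 by rewrite /A /B /C; geo.
have e9 : D (bary x y z) y p = (A - B)/3 by rewrite /A /B /C; geo.
have e10 : D (midpt y z) z p = B/2 by rewrite /A /B /C; geo.
have e11 : D z (bary x y z) p = (C - B)/3 by rewrite /A /B /C; geo.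
have e12 : D (bary x y z) (midpt y z) p = (A - C)/6 by rewrite /A /B /C; geo.
have e13 : D z (midpt z x) p = C/2 by rewrite /A /B /C; geo.
have e14 : D (midpt z x) (bary x y z) p = (A - B)/6 by rewrite /A /B /C; geo.
have e15 : D (bary x y z) z p = (B - C)/3 by rewrite /A /B /C; geo.
have e16 : D (midpt z x) x p = C/2 by rewrite /A /B /C; geo.
have e17 : D x (bary x y z) p = (A - C)/3 by rewrite /A /B /C; geo.
have e18 : D (bary x y z) (midpt z x) p = (B - A)/6 by rewrite /A /B /C; geo.
rewrite e1 e2 e3 e4 e5 e6 e7 e8 e9 e10 e11 e12 e13 e14 e15 e16 e17 e18.
clearbody A B C; clear e1 e2 e3 e4 e5 e6 e7 e8 e9 e10 e11 e12 e13 e14 e15 e16 e17 e18.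
by split; split=> -[h1 h2 h3]; split; lra.
Qed.

Lemma D_rot x y z : D x y z = D y z x. Proof. geo. Qed.

Fixpoint pw (s : seq face) : Prop :=
  if s is x :: s' then (forall y, y \in s' -> disj x y) /\ pw s' else True.

Lemma sub_inside F c p : c \in subdivide F -> inside c p -> inside F p.
Proof.
case: F => [[x y] z]; have [[k1 k2 k3] [k4 k5 k6]] := children_inside x y z p.
rewrite /subdivide !inE.
by repeat case/orP=> [/eqP->|]; try (move=> /eqP->); move=> /=;
  first [ move/k1 | move/k2 | move/k3 | move/k4 | move/k5 | move/k6 ] => -[? ? ?]; split; lra.
Qed.

Lemma sub_pos F c : pos F -> c \in subdivide F -> pos c.
Proof.
case: F => [[x y] z] /= hF.
rewrite /subdivide !inE.
by repeat case/orP=> [/eqP->|]; try (move=> /eqP->); rewrite /=;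
  match goal with |- is_true (0 < D ?a ?b ?c) => have -> : D a b c = D x y z / 6 by geo end; lra.
Qed.

Lemma sub_pw F : pw (subdivide F).
Proof.
case: F => [[x y] z].
have d01 : disj (x, midpt x y, bary x y z) (midpt x y, y, bary x y z) by move=> p [h1 h2]; have [[k1 k2 k3] [k4 k5 k6]] := children_inside x y z p; move/k1: h1 => -[? ? ?]; move/k2: h2 => -[? ? ?]; lra.
have d02 : disj (x, midpt x y, bary x y z) (y, midpt y z, bary x y z) by move=> p [h1 h2]; have [[k1 k2 k3] [k4 k5 k6]] := children_inside x y z p; move/k1: h1 => -[? ? ?]; move/k3: h2 => -[? ? ?]; lra.
have d03 : disj (x, midpt x y, bary x y z) (midpt y z, z, bary x y z) by move=> p [h1 h2]; have [[k1 k2 k3] [k4 k5 k6]] := children_inside x y z p; move/k1: h1 => -[? ? ?]; move/k4: h2 => -[? ? ?]; lra.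
have d04 : disj (x, midpt x y, bary x y z) (z, midpt z x, bary x y z) by move=> p [h1 h2]; have [[k1 k2 k3] [k4 k5 k6]] := children_inside x y z p; move/k1: h1 => -[? ? ?]; move/k5: h2 => -[? ? ?]; lra.
have d05 : disj (x, midpt x y, bary x y z) (midpt z x, x, bary x y z) by move=> p [h1 h2]; have [[k1 k2 k3] [k4 k5 k6]] := children_inside x y z p; move/k1: h1 => -[? ? ?]; move/k6: h2 => -[? ? ?]; lra.
have d12 : disj (midpt x y, y, bary x y z) (y, midpt y z, bary x y z) by move=> p [h1 h2]; have [[k1 k2 k3] [k4 k5 k6]] := children_inside x y z p; move/k2: h1 => -[? ? ?]; move/k3: h2 => -[? ? ?]; lra.
have d13 : disj (midpt x y, y, bary x y z) (midpt y z, z, bary x y z) by move=> p [h1 h2]; have [[k1 k2 k3] [k4 k5 k6]] := children_inside x y z p; move/k2: h1 => -[? ? ?]; move/k4: h2 => -[? ? ?]; lra.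
have d14 : disj (midpt x y, y, bary x y z) (z, midpt z x, bary x y z) by move=> p [h1 h2]; have [[k1 k2 k3] [k4 k5 k6]] := children_inside x y z p; move/k2: h1 => -[? ? ?]; move/k5: h2 => -[? ? ?]; lra.
have d15 : disj (midpt x y, y, bary x y z) (midpt z x, x, bary x y z) by move=> p [h1 h2]; have [[k1 k2 k3] [k4 k5 k6]] := children_inside x y z p; move/k2: h1 => -[? ? ?]; move/k6: h2 => -[? ? ?]; lra.
have d23 : disj (y, midpt y z, bary x y z) (midpt y z, z, bary x y z) by move=> p [h1 h2]; have [[k1 k2 k3] [k4 k5 k6]] := children_inside x y z p; move/k3: h1 => -[? ? ?]; move/k4: h2 => -[? ? ?]; lra.
have d24 : disj (y, midpt y z, bary x y z) (z, midpt z x, bary x y z) by move=> p [h1 h2]; have [[k1 k2 k3] [k4 k5 k6]] := children_inside x y z p; move/k3: h1 => -[? ? ?]; move/k5: h2 => -[? ? ?]; lra.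
have d25 : disj (y, midpt y z, bary x y z) (midpt z x, x, bary x y z) by move=> p [h1 h2]; have [[k1 k2 k3] [k4 k5 k6]] := children_inside x y z p; move/k3: h1 => -[? ? ?]; move/k6: h2 => -[? ? ?]; lra.
have d34 : disj (midpt y z, z, bary x y z) (z, midpt z x, bary x y z) by move=> p [h1 h2]; have [[k1 k2 k3] [k4 k5 k6]] := children_inside x y z p; move/k4: h1 => -[? ? ?]; move/k5: h2 => -[? ? ?]; lra.
have d35 : disj (midpt y z, z, bary x y z) (midpt z x, x, bary x y z) by move=> p [h1 h2]; have [[k1 k2 k3] [k4 k5 k6]] := children_inside x y z p; move/k4: h1 => -[? ? ?]; move/k6: h2 => -[? ? ?]; lra.
have d45 : disj (z, midpt z x, bary x y z) (midpt z x, x, bary x y z) by move=> p [h1 h2]; have [[k1 k2 k3] [k4 k5 k6]] := children_inside x y z p; move/k5: h1 => -[? ? ?]; move/k6: h2 => -[? ? ?]; lra.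
rewrite /subdivide /=.
by do ![split | move=> c; rewrite !inE; repeat case/orP=> [/eqP->|]; try (move=> /eqP->); assumption].
Qed.

Lemma pw_cat s1 s2 : pw (s1 ++ s2) <->
  [/\ pw s1, pw s2 & forall x y, x \in s1 -> y \in s2 -> disj x y].
Proof.
elim: s1 => [|a s1 IH] /=; first by split=> [h|[]//]; split.
split.
  move=> [h1 /IH [h2 h3 h4]]; split=> //.
    split=> // y ys; apply: h1; by rewrite mem_cat ys.
  move=> x y; rewrite inE => /orP[/eqP->|xs] ys; last exact: h4.
  by apply: h1; rewrite mem_cat ys orbT.
move=> [[h1 h2] h3 h4]; split.
  move=> y; rewrite mem_cat => /orP[|ys]; first exact: h1.
  by apply: h4; rewrite ?inE ?eqxx.
apply/IH; split=> // x y xs ys; apply: h4 => //; by rewrite inE xs orbT.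
Qed.

Lemma disj_sub F G c d : disj F G -> c \in subdivide F -> d \in subdivide G -> disj c d.
Proof.
move=> h cF dG p [h1 h2]; apply: (h p); split.
  exact: sub_inside cF h1.
exact: sub_inside dG h2.
Qed.

Lemma pw_flatten s : pw s -> pw (flatten (map subdivide s)).
Proof.
elim: s => [|F s IH] //= [h1 h2]; apply/pw_cat; split.
- exact: sub_pw.
- exact: IH.
move=> x y xF /flattenP [l /mapP [G Gs ->] yG].
exact: disj_sub (h1 _ Gs) xF yG.
Qed.

Lemma faces_inv n : (forall F, F \in faces n -> pos F) /\ pw (faces n).
Proof.
elim: n => [|n [IH1 IH2]] /=.
  split; last by split.
  move=> F; rewrite inE => /eqP-> /=; rewrite /D /v0 /v1 /v2 /=. lra.
split; last exact: pw_flatten.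
move=> F /flattenP [l /mapP [G Gs ->] FG].
exact: sub_pos (IH1 _ Gs) FG.
Qed.

Lemma inside_rot x y z p : inside (x, y, z) p <-> inside (y, z, x) p.
Proof. by split=> -[*]. Qed.

Lemma core a b w w' : pos (a, b, w) -> pos (a, b, w') ->
  exists p, inside (a, b, w) p /\ inside (a, b, w') p.
Proof.
move=> /= h h'.
set k1 := D b w' w; set k2 := D w' a w.
have hq : 0 < 1 + k1 ^+ 2 + k2 ^+ 2 by nra.
set s := D a b w' / (1 + k1 ^+ 2 + k2 ^+ 2).
have hs : 0 < s by apply: divr_gt0.
have hs2 : D a b w' = s * (1 + k1 ^+ 2 + k2 ^+ 2) by rewrite /s divfK ?lt0r_neq0.
exists (padd (padd a b) (pscale s w)).
have e1 : forall c, D a b (padd (padd a b) (pscale s c)) = s * D a b c by move=> c; geo.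
have e2 : D b w (padd (padd a b) (pscale s w)) = D a b w by geo.
have e3 : D w a (padd (padd a b) (pscale s w)) = D a b w by geo.
have e4 : D b w' (padd (padd a b) (pscale s w)) = D a b w' + s * k1 by rewrite /k1; geo.
have e5 : D w' a (padd (padd a b) (pscale s w)) = D a b w' + s * k2 by rewrite /k2; geo.
rewrite /= !e1 e2 e3 e4 e5.
clearbody k1 k2 s.
have q1 : 0 < 1 + k1 + k1 ^+ 2 + k2 ^+ 2 by nra.
have q2 : 0 < 1 + k2 + k1 ^+ 2 + k2 ^+ 2 by nra.
have r1 : 0 < s * (1 + k1 + k1 ^+ 2 + k2 ^+ 2) by apply: mulr_gt0.
have r2 : 0 < s * (1 + k2 + k1 ^+ 2 + k2 ^+ 2) by apply: mulr_gt0.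
split; split; rewrite ?hs2; try nra.
Qed.

Lemma side_rot F d : pos F -> d \in sides F ->
  exists w, pos (d.1, d.2, w) /\ forall p, inside F p <-> inside (d.1, d.2, w) p.
Proof.
case: F => [[x y] z] /= hF; rewrite !inE => /orP[/eqP->|/orP[/eqP->|/eqP->]] /=.
- by exists z.
- exists x; split; first by rewrite -D_rot.
  by move=> p; apply: inside_rot.
- exists y; split; first by rewrite D_rot.
  by move=> p; split=> -[*].
Qed.

Lemma shared F G d : pos F -> pos G -> d \in sides F -> d \in sides G -> ~ disj F G.
Proof.
move=> hF hG dF dG hd.
have [w [hw iw]] := side_rot _ _ hF dF.
have [w' [hw' iw']] := side_rot _ _ hG dG.
have [p [p1 p2]] := core _ _ _ _ hw hw'.
by apply: (hd p); split; [apply/iw | apply/iw'].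
Qed.

Lemma D_xxz x z : D x x z = 0. Proof. geo. Qed.
Lemma D_xyx x y : D x y x = 0. Proof. geo. Qed.
Lemma D_xyy x y : D x y y = 0. Proof. geo. Qed.

Lemma sides_uniq F : pos F -> uniq (sides F).
Proof.
case: F => [[x y] z] /= hF; rewrite !inE !negb_or !andbT.
have nxy : x != y by apply/eqP=> exy; move: hF; rewrite exy D_xxz ltxx.
have nxz : x != z by apply/eqP=> exy; move: hF; rewrite exy D_xyx ltxx.
have nyz : y != z by apply/eqP=> exy; move: hF; rewrite exy D_xyy ltxx.
rewrite !xpair_eqE.
by rewrite (negbTE nxy) (negbTE nxz) (negbTE nyz) /=.
Qed.

Lemma uniq_flat s : (forall F, F \in s -> pos F) -> pw s -> uniq (flatten (map sides s)).
Proof.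
elim: s => [|F s IH] //= hpos [h1 h2].
rewrite cat_uniq sides_uniq ?hpos ?inE ?eqxx //=.
rewrite IH ?andbT //; last by move=> G Gs; apply: hpos; rewrite inE Gs orbT.
apply/hasPn => d /flattenP [l /mapP [G Gs ->] dG]; apply/negP => dF.
apply: (shared _ _ _ _ _ dF dG (h1 G Gs)). all: try (apply: hpos; by rewrite inE ?eqxx ?Gs ?orbT).
Qed.

Lemma uniq_edges_S n : uniq (edges_S n).
Proof. by have [h1 h2] := faces_inv n; apply: uniq_flat. Qed.

Set Implicit Arguments. Unset Strict Implicit. Unset Printing Implicit Defensive.

Definition edge := (Defs.point * Defs.point)%type.
Definition flip (e : edge) : edge := (e.2, e.1).
Definition eqv (x e : edge) : bool := (x == e) || (x == flip e).
Definition subq (L L' : seq edge) := forall z, z \in L -> (z \in L') || (flip z \in L').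

Lemma flipK e : flip (flip e) = e. Proof. by case: e. Qed.

Section Ex.
Variable R : realType.

Fixpoint Ex (l : seq (R * edge)) (H : seq edge -> R) : R :=
  if l is (q, e) :: l' then q * Ex l' (fun L => H (e :: L)) + (1 - q) * Ex l' H
  else H [::].

Definition good (H : seq edge -> R) :=
  (forall L, 0 <= H L) /\ (forall L L', subq L L' -> H L <= H L').

Definition probs (l : seq (R * edge)) := all (fun x => 0 <= x.1 <= 1) l.

Lemma Ex_ext l H1 H2 : (forall L, H1 L = H2 L) -> Ex l H1 = Ex l H2.
Proof.
elim: l H1 H2 => [|[q e] l IH] H1 H2 h /=; first exact: h.
by rewrite (IH _ (fun L => H2 (e :: L))) ?(IH H1 H2).
Qed.

Lemma Ex_cst l c : Ex l (fun _ => c) = c.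
Proof. by elim: l => [|[q e] l IH] //=; rewrite IH; ring. Qed.

Lemma Ex_mono l H1 H2 : probs l -> (forall L, H1 L <= H2 L) -> Ex l H1 <= Ex l H2.
Proof.
elim: l H1 H2 => [|[q e] l IH] H1 H2 /=; first by move=> _; apply.
move=> /andP [/andP [q0 q1] hl] h.
have a1 := IH (fun L => H1 (e :: L)) (fun L => H2 (e :: L)) hl (fun L => h _).
have a2 := IH H1 H2 hl h.
have q1' : 0 <= 1 - q by lra.
by apply: lerD; apply: ler_wpM2l.
Qed.

Lemma Ex_ge0 l H : probs l -> (forall L, 0 <= H L) -> 0 <= Ex l H.
Proof. by move=> hl h; rewrite -(Ex_cst l 0); apply: Ex_mono. Qed.

Lemma Ex_zero (l : seq edge) H : Ex (map (pair 0) l) H = H [::].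
Proof.
elim: l H => [|e l IH] H //=; rewrite !IH; ring.
Qed.

Lemma good_cons H e : good H -> good (fun L => H (e :: L)).
Proof.
move=> [h0 h1]; split=> // L L' hs; apply: h1 => z; rewrite inE => /orP[/eqP->|zL].
  by rewrite inE eqxx.
by rewrite !inE; case/orP: (hs z zL) => ->; rewrite ?orbT.
Qed.

Lemma subq_refl L : subq L L. Proof. by move=> z ->. Qed.

Lemma good_ge H e L : good H -> H L <= H (e :: L).
Proof. by move=> [_ h]; apply: h => z zL; rewrite inE zL orbT. Qed.

Lemma good_eqv H x e L : good H -> eqv x e -> H (x :: L) = H (e :: L).
Proof.
move=> [_ h] /orP[/eqP->|/eqP->] //; apply/eqP; rewrite eq_le !h //.
- move=> z; rewrite !inE => /orP[/eqP->|->]; last by rewrite !orbT.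
  by rewrite ?flipK eqxx ?orbT.
- move=> z; rewrite !inE => /orP[/eqP->|->]; last by rewrite !orbT.
  by rewrite ?flipK eqxx ?orbT.
Qed.

Lemma good_merge H x y e L : good H -> eqv x e -> eqv y e -> H (x :: y :: L) = H (x :: L).
Proof.
move=> hH hx hy; have [_ h] := hH.
have hyx : eqv y x.
  case/orP: hx => /eqP->; case/orP: hy => /eqP->;
    by rewrite /eqv ?flipK eqxx ?orbT.
apply/eqP; rewrite eq_le; apply/andP; split; last first.
  by apply: h => z; rewrite !inE => /orP[->|->]; rewrite ?orbT.
apply: h => z; rewrite !inE => /orP[->|/orP[/eqP->|->]]; rewrite ?orbT //.
by case/orP: hyx => /eqP->; rewrite ?flipK eqxx ?orbT.
Qed.

Lemma good_resp H L L' : good H -> L =i L' -> H L = H L'.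
Proof.
move=> [_ h] hL; apply/eqP; rewrite eq_le !h //.
  by move=> z; rewrite hL => ->.
by move=> z; rewrite -hL => ->.
Qed.

Lemma Ex_merge q1 q2 x y l H :
  (forall L, H (x :: y :: L) = H (x :: L)) -> (forall L, H (y :: L) = H (x :: L)) ->
  Ex ((q1, x) :: (q2, y) :: l) H = Ex ((1 - (1 - q1) * (1 - q2), x) :: l) H.
Proof.
move=> h1 h2 /=.
rewrite (Ex_ext l h1) (Ex_ext l h2); ring.
Qed.

Lemma Ex_swap a b l H : (forall L, H (a.2 :: b.2 :: L) = H (b.2 :: a.2 :: L)) ->
  Ex (a :: b :: l) H = Ex (b :: a :: l) H.
Proof.
case: a => qa a; case: b => qb b /= h.
rewrite (Ex_ext l h); ring.
Qed.

Definition resp (H : seq edge -> R) := forall L L', L =i L' -> H L = H L'.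

Lemma resp_cons H e : resp H -> resp (fun L => H (e :: L)).
Proof. by move=> h L L' hL; apply: h => z; rewrite !inE hL. Qed.

Lemma Ex_front l1 a l2 H : resp H -> Ex (l1 ++ a :: l2) H = Ex (a :: l1 ++ l2) H.
Proof.
case: a => qa a.
elim: l1 H => [|[qb b] l1 IH] H hH //=.
have e : forall L, H (b :: a :: L) = H (a :: b :: L).
  by move=> L; apply: hH => z; rewrite !inE orbCA.
rewrite IH; last exact: resp_cons.
rewrite IH //= (Ex_ext _ e); ring.
Qed.

Lemma Ex_perm l l' H : resp H -> perm_eq l l' -> Ex l H = Ex l' H.
Proof.
elim: l l' H => [|a l IH] l' H hH pl.
  by move: pl; rewrite perm_sym => /perm_nilP->.
have al : a \in l' by rewrite -(perm_mem pl) inE eqxx.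
case/splitPr: al pl => p1 p2 pl.
rewrite Ex_front //.
have pl' : perm_eq l (p1 ++ p2).
  by rewrite -(perm_cons a) (perm_trans pl) // -cat1s perm_catCA.
case: a pl => q e pl /=.
by rewrite (IH (p1 ++ p2) (fun L => H (e :: L))) ?(IH (p1 ++ p2) H) //; apply: resp_cons.
Qed.

End Ex.

Lemma flip_eq x e : (flip x == e) = (x == flip e).
Proof. by apply/eqP/eqP => [<-|->]; rewrite flipK. Qed.

Lemma count_uu x s :
  count (eqv x) (undup_unordered s) = ((x \in s) || (flip x \in s)) :> nat.
Proof.
elim: s => [|e s IH] //=.
rewrite !inE flip_eq.
case: ifP => hb /=.
  rewrite IH; case: (eqVneq x e) => [->|nxe]; first by rewrite hb.
  case: (eqVneq x (flip e)) => [->|nxf] //=.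
  by rewrite flipK orbT orbC; case/orP: hb => ->; rewrite ?orbT.
have [he hf] : (e \in s) = false /\ (flip e \in s) = false.
  by move/norP: hb => [/negbTE-> /negbTE->].
rewrite IH /eqv.
case: (eqVneq x e) => [->|nxe]; first by rewrite he hf.
case: (eqVneq x (flip e)) => [exf|nxf] //=; subst x.
by rewrite flipK he hf.
Qed.

Section S.
Variable R : realType.

Lemma convex (q p A A' B B' : R) : 0 <= q -> q <= p -> p <= 1 ->
  A <= A' -> B <= B' -> B' <= A' -> q * A + (1 - q) * B <= p * A' + (1 - p) * B'.
Proof.
move=> h0 h1 h2 h3 h4 h5.
have a1 : q * A <= q * A' by apply: ler_wpM2l.
have a2 : (1 - q) * B <= (1 - q) * B' by apply: ler_wpM2l; lra.
have a3 : 0 <= (p - q) * (A' - B') by apply: mulr_ge0; lra.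
nra.
Qed.

Lemma probs_map (p : R) (s : seq edge) : 0 <= p <= 1 -> probs (map (pair p) s).
Proof. by move=> hp; rewrite /probs all_map; apply/allP. Qed.

Lemma Ex_ge_cons (l : seq (R * edge)) H e : probs l -> good H ->
  Ex l H <= Ex l (fun L => H (e :: L)).
Proof. by move=> hl hH; apply: Ex_mono => // L; apply: good_ge. Qed.

Lemma Ex_undup (p : R) s H : 0 <= p <= 1 -> good H ->
  Ex (map (pair p) (undup_unordered s)) H <= Ex (map (pair p) s) H.
Proof.
move=> hp; elim: s H => [|e s IH] H hH //=.
have hs := probs_map s hp.
have a1 := Ex_ge_cons e hs hH.
case: ifP => _ /=.
  apply: (le_trans (IH H hH)).
  have : 0 <= p * (Ex (map (pair p) s) (fun L => H (e :: L)) - Ex (map (pair p) s) H).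
    by apply: mulr_ge0; lra.
  nra.
have i1 := IH _ (good_cons e hH); have i2 := IH _ hH.
apply: lerD; apply: ler_wpM2l => //; lra.
Qed.

End S.

Lemma perm_ins x (et : seq edge) (B : edge -> seq edge) : count (eqv x) et = 1%N ->
  perm_eq (flatten (map (fun e => if eqv x e then x :: B e else B e) et))
          (x :: flatten (map B et)).
Proof.
elim: et => [|e et IH] //=.
case: ifP => hx /=.
  move=> hc; have h0 : count (eqv x) et = 0%N by move: hc; rewrite add1n => -[].
  have /hasPn hn : ~~ has (eqv x) et by rewrite has_count h0.
  have -> : map (fun e => if eqv x e then x :: B e else B e) et = map B et.
    by apply/eq_in_map => e' /hn /negbTE ->.
  exact: perm_refl.
move=> /IH h.
rewrite -(perm_cat2l (B e)) in h; apply: (perm_trans h).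
by rewrite -cat1s perm_catCA.
Qed.

Lemma perm_blocks (et : seq edge) (l : seq edge) :
  (forall x, x \in l -> count (eqv x) et = 1%N) ->
  perm_eq l (flatten (map (fun e => [seq x <- l | eqv x e]) et)).
Proof.
elim: l => [|x l IH] hc /=.
  by elim: et {hc} => [|e et IH] //=.
have := perm_ins (fun e => [seq x <- l | eqv x e]) (hc x (mem_head _ _)).
rewrite perm_sym => h; rewrite (perm_trans _ h) // perm_cons.
by apply: IH => y yl; apply: hc; rewrite inE yl orbT.
Qed.

Section B.
Variable R : realType.

Lemma Ex_blocks (p : R) (et : seq edge) (f : edge -> seq edge) H :
  0 <= p <= 1 -> good H ->
  (forall e, e \in et -> all (fun x => eqv x e) (f e) && (size (f e) <= 2)%N) ->
  Ex (map (pair (p / 2)) (flatten (map f et))) H <= Ex (map (pair p) et) H.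
Proof.
move=> hp; have /andP [hp0 hp1] := hp.
elim: et H => [|e et IH] H hH hf /=; first exact: lexx.
have hf' : forall e', e' \in et -> all (fun x => eqv x e') (f e') && (size (f e') <= 2)%N.
  by move=> e' h; apply: hf; rewrite inE h orbT.
have /andP [hall hsz] := hf e (mem_head _ _).
have hT := probs_map et hp.
have i1 := IH _ (good_cons e hH) hf'.
have i2 := IH _ hH hf'.
have a1 := Ex_ge_cons e hT hH.
set A' := Ex (map (pair p) et) (fun L => H (e :: L)) in i1 a1 *.
set B' := Ex (map (pair p) et) H in i2 a1 *.
rewrite map_cat.
move: hall hsz; case: (f e) => [|x [|y [|z r]]] // hall _.
- rewrite /=. have : 0 <= p * (A' - B') by apply: mulr_ge0; lra.
  nra.
- move: hall => /= /andP [hx _].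
  rewrite /= (@Ex_ext _ _ (fun L => H (x :: L)) (fun L => H (e :: L))); last first.
    by move=> L; apply: good_eqv.
  apply: convex => //; lra.
- move: hall => /= /and3P [hx hy _].
  change (Ex ((p/2, x) :: (p/2, y) :: map (pair (p/2)) (flatten (map f et))) H <= Ex (map (pair p) (e :: et)) H).
  rewrite Ex_merge; first last.
  + by move=> L; rewrite !(good_eqv L hH hx) (good_eqv L hH hy).
  + by move=> L; apply: (good_merge L hH hx hy).
  rewrite /= (@Ex_ext _ _ (fun L => H (x :: L)) (fun L => H (e :: L))); last first.
    by move=> L; apply: good_eqv.
  rewrite /=; apply: convex => //; nra.
Qed.

End B.

Definition liftset n (O : {set 'I_n}) : {set 'I_n.+1} := [set lift ord0 i | i in O].
Definition mk n (bO : bool * {set 'I_n}) : {set 'I_n.+1} :=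
  if bO.1 then ord0 |: liftset bO.2 else liftset bO.2.
Definition unmk n (O : {set 'I_n.+1}) : bool * {set 'I_n} :=
  (ord0 \in O, [set i | lift ord0 i \in O]).

Lemma ord0_neq n (i : 'I_n) : (ord0 == lift ord0 i :> 'I_n.+1) = false.
Proof. exact/negbTE/neq_lift. Qed.
Lemma lift0_neq n (i : 'I_n) : (lift ord0 i == ord0 :> 'I_n.+1) = false.
Proof. by rewrite eq_sym ord0_neq. Qed.

Lemma mem_liftset n (O : {set 'I_n}) i : (lift ord0 i \in liftset O) = (i \in O).
Proof. by rewrite mem_imset //; apply: lift_inj. Qed.

Lemma ord0_liftset n (O : {set 'I_n}) : (ord0 \in liftset O) = false.
Proof.
apply/negbTE/imsetP => -[i _ /eqP]; by rewrite ord0_neq.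
Qed.

Lemma mkK n : cancel (@mk n) (@unmk n).
Proof.
case=> b O; rewrite /unmk /mk /=; congr pair.
  by case: b; rewrite ?in_setU1 ?eqxx // ord0_liftset.
apply/setP=> i; rewrite inE; case: b => /=; rewrite ?in_setU1 ?lift0_neq mem_liftset //.
Qed.

Lemma unmkK n : cancel (@unmk n) (@mk n).
Proof.
move=> O; rewrite /unmk /mk /=; apply/setP => j.
case: (unliftP ord0 j) => [i ->|->].
  case: ifP => _; rewrite ?in_setU1 ?lift0_neq /= mem_liftset inE //.
by case: ifP => h; rewrite ?in_setU1 ?eqxx ?ord0_liftset ?h.
Qed.

Lemma sum_split n (R : realType) (G : {set 'I_n.+1} -> R) :
  \sum_(O : {set 'I_n.+1}) G O =
  \sum_(O : {set 'I_n}) G (mk (true, O)) + \sum_(O : {set 'I_n}) G (mk (false, O)).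
Proof.
rewrite (reindex (@mk n)) /=; last by apply: onW_bij; exists (@unmk n); [apply: mkK | apply: unmkK].
rewrite -(pair_big xpredT xpredT (fun b O => G (mk (b, O)))) /=.
by rewrite big_bool.
Qed.

Definition openlist (es : seq edge) (O : {set 'I_(size es)}) : seq edge :=
  [seq nth (v0, v0) es (val i) | i <- enum O].
Arguments openlist : clear implicits.

Lemma mem_openlist es O z :
  (z \in openlist es O) = [exists i in O, nth (v0, v0) es i == z].
Proof.
apply/mapP/existsP => [[i iO ->]|[i /andP [iO /eqP <-]]].
  by exists i; rewrite -mem_enum iO eqxx.
by exists i; rewrite ?mem_enum.
Qed.

Lemma mem_openlist_mk e es (b : bool) (O : {set 'I_(size es)}) z :
  (z \in openlist (e :: es) (mk (b, O))) = (b && (z == e)) || (z \in openlist es O).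
Proof.
rewrite !mem_openlist; apply/existsP/orP.
  move=> [j /andP [jO /eqP <-]]; move: jO.
  case: (unliftP ord0 j) => [i ->|->] /=.
    rewrite /mk /=; case: b; rewrite ?in_setU1 ?lift0_neq mem_liftset /= => iO;
      by right; apply/existsP; exists i; rewrite iO /= ?lift0 /= ?eqxx.
  by rewrite /mk /=; case: b; rewrite ?in_setU1 ?eqxx ?ord0_liftset //= => _; left.
move=> [/andP [-> /eqP ->]|/existsP [i /andP [iO /eqP <-]]].
  by exists ord0; rewrite /mk /= in_setU1 eqxx.
exists (lift ord0 i); rewrite /mk /=; case: b; rewrite ?in_setU1 ?lift0_neq mem_liftset iO //=.
Qed.

Lemma card_mk n (b : bool) (O : {set 'I_n}) : #|mk (b, O)| = (b + #|O|)%N.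
Proof.
rewrite /mk /=; case: b; rewrite ?cardsU1 ?ord0_liftset card_imset //; exact: lift_inj.
Qed.

Section Bridge.
Variable R : realType.

Lemma sum_Ex (es : seq edge) (H : seq edge -> R) (p : R) : resp H ->
  \sum_(O : {set 'I_(size es)}) p ^+ #|O| * (1 - p) ^+ (size es - #|O|) * H (openlist es O)
  = Ex (map (pair p) es) H.
Proof.
elim: es H => [|e es IH] H hH.
  rewrite (big_pred1 (@finset.set0 _)) /=; last by move=> O; symmetry; apply/eqP/setP => -[].
  rewrite cards0 !expr0 !mul1r; apply: hH => z.
  by rewrite mem_openlist; apply/existsP => -[[]].
rewrite /= sum_split /=.
rewrite -(IH (fun L => H (e :: L))); last exact: resp_cons.
rewrite -(IH H) // !mulr_sumr.
congr (_ + _); apply: eq_bigr => O _.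
  rewrite card_mk add1n subSS exprS.
  rewrite (hH _ (e :: openlist es O)); first ring.
  by move=> z; rewrite mem_openlist_mk /= inE.
rewrite card_mk add0n.
have hc : (#|O| <= size es)%N by rewrite -[X in (_ <= X)%N]card_ord max_card.
rewrite subSn // exprS.
rewrite (hH _ (openlist es O)); first ring.
by move=> z; rewrite mem_openlist_mk.
Qed.

End Bridge.

Definition adjL (L : seq edge) (x y : Defs.point) : bool := ((x, y) \in L) || ((y, x) \in L).
Definition conn (L : seq edge) (a b : Defs.point) : Prop :=
  exists s, path (adjL L) a s /\ last a s = b.

Lemma open_adjE es (O : {set 'I_(size es)}) x y : open_adj O x y = adjL (openlist es O) x y.
Proof.
rewrite /open_adj /adjL !mem_openlist.
apply/existsP/orP => [[i /andP [iO /orP [h|h]]]|[/existsP [i /andP [iO h]]|/existsP [i /andP [iO h]]]].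
- by left; apply/existsP; exists i; rewrite iO.
- by right; apply/existsP; exists i; rewrite iO.
- by exists i; rewrite iO h.
- by exists i; rewrite iO h orbT.
Qed.

Lemma open_conn es (O : {set 'I_(size es)}) a b :
  open_connected O a b <-> conn (openlist es O) a b.
Proof.
have e : open_adj O =2 adjL (openlist es O) by move=> x y; apply: open_adjE.
by split=> -[s [h1 h2]]; exists s; rewrite (eq_path e) in h1 *.
Qed.

Section F.
Variable R : realType.

Definition Hc (a b : Defs.point) (L : seq edge) : R := if `[< conn L a b >] then 1 else 0.

Lemma Hc_good a b : good (Hc a b).
Proof.
split=> [L|L L' hs]; rewrite /Hc; first by case: ifP.
case: (asboolP (conn L a b)) => [[s [h1 h2]]|_]; last by case: ifP.
have -> : `[< conn L' a b >] = true.
  apply/asboolP; exists s; split=> //; apply: sub_path h1 => x y.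
  rewrite /adjL => /orP [/hs|/hs]; rewrite /flip /=.
    by case/orP=> ->; rewrite ?orbT.
  by case/orP=> ->; rewrite ?orbT.
by [].
Qed.

Lemma perc_Ex es (p : R) a b : perc_prob es p a b = Ex (map (pair p) es) (Hc a b).
Proof.
rewrite /perc_prob -sum_Ex; last by move=> L L' h; apply: good_resp (Hc_good a b) h.
apply: eq_bigr => O _; congr (_ * _); rewrite /Hc.
by rewrite (asbool_equiv_eq (open_conn O a b)).
Qed.

Lemma perc0 es : perc_prob es (0 : R) v0 v1 = 0.
Proof.
rewrite perc_Ex Ex_zero /Hc; case: asboolP => // -[[|y s] [h1 h2]] //=.

Qed.

Lemma perc_ge0 es (p : R) : 0 <= p <= 1 -> 0 <= perc_prob es p v0 v1.
Proof.
move=> hp; rewrite perc_Ex; apply: Ex_ge0; first exact: probs_map.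
by case: (Hc_good v0 v1).
Qed.

Lemma PT_le_PS n (p : R) : 0 <= p <= 1 ->
  perc_prob (edges_T n) p v0 v1 <= perc_prob (edges_S n) p v0 v1.
Proof. by move=> hp; rewrite !perc_Ex; apply: Ex_undup => //; apply: Hc_good. Qed.

Lemma PS_le_PT n (p : R) : 0 <= p <= 1 ->
  perc_prob (edges_S n) (p / 2) v0 v1 <= perc_prob (edges_T n) p v0 v1.
Proof.
move=> hp; rewrite !perc_Ex /edges_T.
set es := edges_S n.
have hu : uniq es := uniq_edges_S n.
set et := undup_unordered es.
have hH := @Hc_good v0 v1.
rewrite (@Ex_perm _ _ (map (pair (p / 2)) (flatten (map (fun e => [seq x <- es | eqv x e]) et)))).
- apply: Ex_blocks => // e _.
  rewrite filter_all /=.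
  have -> : (size [seq x <- es | eqv x e] <= 2)%N = true => //.
  apply/idP; apply: (@uniq_leq_size _ _ [:: e; flip e]); first exact: filter_uniq.
  by move=> x; rewrite mem_filter /eqv !inE => /andP [].
- by move=> L L' h; apply: good_resp hH h.
- rewrite perm_map //; apply: perm_blocks => x xes.
  by rewrite count_uu xes.
Qed.

End F.

Definition Aset (R : realType) (G : nat -> seq edge) : set R :=
  [set p : R | 0 <= p <= 1 /\ (fun n : nat => perc_prob (G n) p v0 v1) @ \oo --> (0 : R)]%classic.
Arguments Aset : clear implicits.

Lemma zero_in (R : realType) G : Aset R G 0.
Proof.
split; first by rewrite lexx ler01.
rewrite (_ : (fun n => perc_prob (G n) 0 v0 v1) = fun _ => 0); first exact: cvg_cst.
by apply: funext => n; apply: perc0.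
Qed.

Lemma has_sup_A (R : realType) G : has_sup (Aset R G).
Proof.
split; first by exists 0; apply: zero_in.
by exists 1 => p [/andP [_ h] _].
Qed.
Arguments has_sup_A : clear implicits.

Theorem main (R : realType) :
  (p_T : R) / 2 <= (p_S : R) <= (p_T : R).
Proof.
rewrite /p_T /p_S /crit_value.
change (sup (Aset R edges_T) / 2 <= sup (Aset R edges_S) <= sup (Aset R edges_T)).
have sub : (Aset R edges_S `<=` Aset R edges_T)%classic.
  move=> p [hp hc]; split=> //.
  apply: (squeeze_cvgr _ (cvg_cst (0 : R)) hc).
  by apply: nearW => n; rewrite perc_ge0 ?PT_le_PS.
have half : forall p, Aset R edges_T p -> Aset R edges_S (p / 2).
  move=> p [hp hc]; have /andP [h0 h1] := hp.
  split; first by apply/andP; split; lra.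
  apply: (squeeze_cvgr _ (cvg_cst (0 : R)) hc).
  by apply: nearW => n; rewrite perc_ge0 ?PS_le_PT //; apply/andP; split; lra.
apply/andP; split.
  suff : sup (Aset R edges_T) <= 2 * sup (Aset R edges_S) by lra.
  apply: ge_sup; first by exists 0; apply: zero_in.
  move=> p hp.
  have := sup_upper_bound (has_sup_A R edges_S) (half p hp).
  lra.
apply: sup_le; last exact: has_sup_A.
  by move=> p hp; exists p; split; [exact: sub | exact: lexx].
by exists 0; apply: zero_in.
Qed.

Unset Implicit Arguments.

Theorem theorem4p9 (R : realType) :
  (p_T : R) / 2 <= (p_S : R) <= (p_T : R).
Proof. exact: main. Qed.
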